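(* For every positive integer $n$, the pairs $(2n,3n)$ and $(2n,5n)$ are tame; that is, for every integer $c>3n$ there is a tame polynomial automorphism of $\mathbb{C}^3$ with multidegree $(2n,3n,c)$, and for every integer $c>5n$ there is a tame polynomial automorphism of $\mathbb{C}^3$ with multidegree $(2n,5n,c)$.
   Context: For a polynomial automorphism $F=(F_1,\ldots,F_n)$ of $\mathbb{C}^n$, its multidegree is $\operatorname{mdeg}F:=(\deg F_1,\ldots,\deg F_n)$, where $\deg$ is total degree. A map is elementary if it changes one coordinate $X_j$ to $X_j+g$ with $g$ a polynomial in the other variables and fixes the remaining coordinates. A polynomial automorphism is tame if it is a composition of invertible affine-linear maps and elementary maps. A pair $(a,b)$ of positive integers with $a<b$ and $a\nmid b$ is called tame if for every integer $c>b$ there exists a tame polynomial automorphism of $\mathbb{C}^3$ with multidegree $(a,b,c)$. *)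

(* Defs.v *)
(* Polynomials in three variables X1, X2, X3 over a field F are
   represented as nested univariate polynomials {poly {poly {poly F}}}:
   the outer variable is X3, the middle one X2, the innermost X1. *)
From HB Require Import structures.
From mathcomp Require Import all_boot all_order all_algebra.
Set Implicit Arguments. Unset Strict Implicit. Unset Printing Implicit Defensive.
Import Order.TTheory GRing.Theory Num.Theory.
Local Open Scope ring_scope.

Section Poly3.
Variable F : fieldType.

Definition P3 := {poly {poly {poly F}}}.

Definition map3 := 'I_3 -> P3.

Definition i0 : 'I_3 := @Ordinal 3 0 isT.
Definition i1 : 'I_3 := @Ordinal 3 1 isT.
Definition i2 : 'I_3 := @Ordinal 3 2 isT.

Definition cst3 (a : F) : P3 := a%:P%:P%:P.

Definition Xv (i : 'I_3) : P3 :=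
  if i == i0 then ('X : {poly F})%:P%:P
  else if i == i1 then ('X : {poly {poly F}})%:P
  else 'X.

(* coefficient of X1^k X2^j X3^i *)
Definition coef3 (p : P3) (k j i : nat) : F := ((p`_i)`_j)`_k.

Definition eval3 (p : P3) (q : map3) : P3 :=
  \sum_(i < size p) \sum_(j < size p`_i) \sum_(k < size (p`_i)`_j)
     cst3 (coef3 p k j i) * (q i0) ^+ k * (q i1) ^+ j * (q i2) ^+ i.

(* total degree (the zero polynomial gets degree 0; irrelevant here) *)
Definition tdeg (p : P3) : nat :=
  let s1 := size p in
  let s2 := fun i : nat => size (p`_i) in
  let s3 := fun i j : nat => size ((p`_i)`_j) in
  (\max_(i < s1) \max_(j < s2 i) \max_(k < s3 i j)
     (if coef3 p k j i != 0%R then i + j + k else 0))%N.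

Definition mdeg (f : map3) : nat * nat * nat :=
  (tdeg (f i0), tdeg (f i1), tdeg (f i2)).

Definition comp3 (f g : map3) : map3 := fun i => eval3 (f i) g.

Definition poly_automorphism (f : map3) : Prop :=
  exists g : map3, forall i, comp3 f g i = Xv i /\ comp3 g f i = Xv i.

Definition affine3 (f : map3) : Prop :=
  exists (A : 'M[F]_3) (b : 'I_3 -> F), \det A != 0 /\
    forall i, f i = \sum_(j < 3) cst3 (A i j) * Xv j + cst3 (b i).

(* elementary map: X_j -> X_j + g, g a polynomial in the other variables *)
Definition elementary3 (f : map3) : Prop :=
  exists (j : 'I_3) (g h : P3),
    g = eval3 h (fun i => if i == j then 0 else Xv i) /\
    forall i, f i = if i == j then Xv i + g else Xv i.

Inductive tame : map3 -> Prop :=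
| tame_affine f : affine3 f -> tame f
| tame_elem f : elementary3 f -> tame f
| tame_comp f g h : tame f -> tame g -> (forall i, h i = comp3 f g i) -> tame h.

Definition tame_pair (a b : nat) : Prop :=
  forall c : nat, (b < c)%N ->
    exists f : map3, tame f /\ poly_automorphism f /\ mdeg f = (a, b, c).

End Poly3.

(* Main.v *)
Require Import Defs.
From HB Require Import structures.
From mathcomp Require Import all_boot all_order all_algebra.
From Stdlib Require Import Lia Ring.

Set Implicit Arguments. Unset Strict Implicit. Unset Printing Implicit Defensive.
Import Order.TTheory GRing.Theory Num.Theory.
Local Open Scope ring_scope.

Section Ev.
Variable F : fieldType.
Local Notation P3 := (P3 F).

Definition cstm : {rmorphism F -> P3} := (polyC \o polyC \o polyC)%FUN.
Lemma cstmE a : cstm a = cst3 a. Proof. by []. Qed.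

Variable q : map3 F.
Lemma cfu1 : commr_rmorph cstm (q (i0)). Proof. by move=> a; exact: mulrC. Qed.
Definition E1 : {rmorphism {poly F} -> P3} := horner_morph cfu1.
Lemma cfu2 : commr_rmorph E1 (q (i1)). Proof. by move=> a; exact: mulrC. Qed.
Definition E2 : {rmorphism {poly {poly F}} -> P3} := horner_morph cfu2.
Lemma cfu3 : commr_rmorph E2 (q (i2)). Proof. by move=> a; exact: mulrC. Qed.
Definition E3 : {rmorphism P3 -> P3} := horner_morph cfu3.

Lemma hm_sum (R S : nzRingType) (f : {rmorphism R -> S}) u (cf : commr_rmorph f u) (p : {poly R}) :
  horner_morph cf p = \sum_(i < size p) f p`_i * u ^+ i.
Proof.
rewrite /horner_morph (@horner_coef_wide _ (size p)); last exact: size_poly.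
by apply: eq_bigr => i _; rewrite coef_map.
Qed.

Lemma eval3E p : eval3 p q = E3 p.
Proof.
rewrite /eval3 /E3 /= hm_sum; apply: eq_bigr => i _.
rewrite /E2 /= hm_sum mulr_suml; apply: eq_bigr => j _.
rewrite /E1 /= hm_sum !mulr_suml; apply: eq_bigr => k _.
by rewrite /coef3.
Qed.
End Ev.

Set Implicit Arguments. Unset Strict Implicit. Unset Printing Implicit Defensive.
Import Order.TTheory GRing.Theory Num.Theory.
Local Open Scope ring_scope.

Section B.
Variable F : fieldType.
Local Notation P3 := (P3 F).
Local Notation map3 := (map3 F).
Local Notation Xv := (Xv F).

Lemma eval3_Xv (q : map3) i : eval3 (Xv i) q = q i.
Proof.
rewrite eval3E; case: i => [[|[|[|//]]] Hi]; rewrite /Xv /= /E3 /=.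
- rewrite horner_morphC /E2 /= horner_morphC /E1 /= horner_morphX.
  by congr q; apply: val_inj.
- rewrite horner_morphC /E2 /= horner_morphX.
  by congr q; apply: val_inj.
- rewrite horner_morphX.
  by congr q; apply: val_inj.
Qed.

Lemma eval3_cst (q : map3) a : eval3 (cst3 a) q = cst3 a.
Proof.
by rewrite eval3E /cst3 /E3 /= !horner_morphC /E2 /= horner_morphC /E1 /= horner_morphC.
Qed.

Lemma uniq3 (f g : {rmorphism P3 -> P3}) :
  (forall a, f (cst3 a) = g (cst3 a)) -> (forall i, f (Xv i) = g (Xv i)) ->
  forall p, f p = g p.
Proof.
move=> Hc HX.
have X0 : ('X : {poly F})%:P%:P = Xv i0 by [].
have X1 : ('X : {poly {poly F}})%:P = Xv i1 by [].
have X2 : ('X : P3) = Xv i2 by [].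
have H1 : forall d : {poly F}, f d%:P%:P = g d%:P%:P.
  elim/poly_ind => [|d e IH]; first by rewrite !rmorph0.
  by rewrite !rmorphD !rmorphM /= X0 HX IH; congr (_ + _); exact: Hc.
have H2 : forall d : {poly {poly F}}, f d%:P = g d%:P.
  elim/poly_ind => [|d e IH]; first by rewrite !rmorph0.
  by rewrite !rmorphD !rmorphM /= X1 HX IH H1.
elim/poly_ind => [|d e IH]; first by rewrite !rmorph0.
by rewrite !rmorphD !rmorphM /= X2 HX IH H2.
Qed.

Lemma eval3_ext p (s t : map3) : (forall i, s i = t i) -> eval3 p s = eval3 p t.
Proof. by move=> H; rewrite /eval3 !H. Qed.

Lemma eval3_assoc p (g h : map3) : eval3 (eval3 p g) h = eval3 p (comp3 g h).
Proof.
have := @uniq3 (E3 h \o E3 g)%FUN (E3 (comp3 g h)).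
rewrite /= => /(_ _ _ p); rewrite -!eval3E; apply.
- by move=> a; rewrite -!eval3E !eval3_cst.
- by move=> i; rewrite -!eval3E !eval3_Xv.
Qed.

End B.

Set Implicit Arguments. Unset Strict Implicit. Unset Printing Implicit Defensive.
Import Order.TTheory GRing.Theory Num.Theory.
Local Open Scope ring_scope.

Section C.
Variable F : fieldType.
Local Notation P3 := (P3 F).
Local Notation map3 := (map3 F).
Local Notation Xv := (Xv F).

Definition sub (j : 'I_3) : map3 := fun i => if i == j then 0 else Xv i.
Definition elem (j : 'I_3) (h : P3) : map3 :=
  fun i => if i == j then Xv i + eval3 h (sub j) else Xv i.

Lemma eval3_sub_elem j h h' : eval3 (eval3 h (sub j)) (elem j h') = eval3 h (sub j).
Proof.
rewrite eval3_assoc; apply: eval3_ext => i.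
rewrite /comp3 /sub; case: eqP => [_|/eqP ne]; first by rewrite eval3E rmorph0.
by rewrite eval3_Xv /elem (negbTE ne).
Qed.

Lemma elem_inv j h : forall i, comp3 (elem j h) (elem j (- h)) i = Xv i.
Proof.
move=> i; rewrite /comp3 {1}/elem; case: eqP => [->|/eqP ne].
  rewrite eval3E rmorphD /= -!eval3E eval3_sub_elem eval3_Xv /elem eqxx.
  by rewrite eval3E rmorphN /= -eval3E addrNK.
by rewrite eval3_Xv /elem (negbTE ne).
Qed.

Definition good (f : map3) := tame f /\ poly_automorphism f.

Lemma good_elem j h : good (elem j h).
Proof.
split; first by apply: tame_elem; exists j, (eval3 h (sub j)), h.
exists (elem j (- h)) => i; split; first exact: elem_inv.
have := @elem_inv j (- h) i; rewrite opprK; apply: etrans.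
by [].
Qed.

Lemma good_comp f g : good f -> good g -> good (comp3 f g).
Proof.
move=> [tf [f' Hf]] [tg [g' Hg]]; split; first exact: (tame_comp tf tg).
exists (comp3 g' f') => i; split.
  rewrite /comp3 eval3_assoc -[RHS](proj1 (Hf i)); apply: eval3_ext => j.
  by have := proj1 (Hg j); rewrite /comp3 -eval3_assoc => ->; rewrite eval3_Xv.
rewrite /comp3 eval3_assoc -[RHS](proj2 (Hg i)); apply: eval3_ext => j.
by have := proj2 (Hf j); rewrite /comp3 -eval3_assoc => ->; rewrite eval3_Xv.
Qed.

End C.

Set Implicit Arguments. Unset Strict Implicit. Unset Printing Implicit Defensive.
Import Order.TTheory GRing.Theory Num.Theory.
Local Open Scope ring_scope.

Ltac tolia := repeat match goal with
  | H : is_true (leq _ _) |- _ => move/ssrnat.leP: H => H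
  | |- is_true (leq _ _) => apply/ssrnat.leP
  end; unfold addn, subn, muln, addn_rec, subn_rec, muln_rec in *.
Ltac slia := tolia; lia.

Section D.
Variable F : fieldType.
Local Notation P3 := (P3 F).
Local Notation Xv := (Xv F).

Definition tdb (p : P3) (e : nat) :=
  forall i j k, coef3 p k j i != 0 -> (i + j + k <= e)%N.

Lemma tdb_le p e e' : tdb p e -> (e <= e')%N -> tdb p e'.
Proof. by move=> H le i j k /H h; exact: leq_trans le. Qed.

Lemma tdb0 e : tdb 0 e.
Proof. by move=> i j k; rewrite /coef3 !coef0 eqxx. Qed.

Lemma tdb_add p q e : tdb p e -> tdb q e -> tdb (p + q) e.
Proof.
move=> Hp Hq i j k; rewrite /coef3 !coefD.
case: (eqVneq (coef3 p k j i) 0) => [Hz|nz]; last by move=> _; exact: Hp nz.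
by rewrite /coef3 in Hz; rewrite Hz add0r => h; apply: Hq.
Qed.

Lemma tdb_opp p e : tdb p e -> tdb (- p) e.
Proof. by move=> Hp i j k; rewrite /coef3 !coefN oppr_eq0; exact: Hp. Qed.

Lemma tdb_sub p q e : tdb p e -> tdb q e -> tdb (p - q) e.
Proof. by move=> Hp Hq; apply: tdb_add => //; exact: tdb_opp. Qed.

Lemma tdb_mul p q a b : tdb p a -> tdb q b -> tdb (p * q) (a + b).
Proof.
move=> Hp Hq i j k; apply: contraR; rewrite -ltnNge => lt.

rewrite /coef3 coefM !coef_sum; apply/eqP; apply: big1 => -[l Hl] _ /=.
rewrite coefM coef_sum; apply: big1 => -[m Hm] _ /=.
rewrite coefM; apply: big1 => -[r Hr] _ /=.
case: (eqVneq (coef3 p r m l) 0) => [Hz|nz1]; first by rewrite /coef3 in Hz; rewrite Hz mul0r.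
case: (eqVneq (coef3 q (k - r) (j - m) (i - l)) 0) => [Hz|nz2]; first by rewrite /coef3 in Hz; rewrite Hz mulr0.
have h1 := Hp _ _ _ nz1; have h2 := Hq _ _ _ nz2.
exfalso; slia.
Qed.

Lemma tdb1 : tdb 1 0.
Proof.
move=> i j k; rewrite /coef3 !coef1.
by case: i => [|i] /=; rewrite ?coef0 ?coef1 ?eqxx //; case: j => [|j] /=; rewrite ?coef0 ?coef1 ?eqxx //;
 case: k => [|k] /=; rewrite ?eqxx.
Qed.

Lemma tdb_exp p a m : tdb p a -> tdb (p ^+ m) (a * m).
Proof.
move=> Hp; elim: m => [|m IH]; first by rewrite expr0 muln0; exact: tdb1.
by rewrite exprS mulnS; apply: tdb_mul.
Qed.

Lemma tdb_cst a : tdb (cst3 a) 0.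
Proof.
move=> i j k; rewrite /coef3 /cst3 !coefC.
by case: i => [|i] /=; rewrite ?coef0 ?eqxx //; case: j => [|j] /=; rewrite ?coef0 ?coefC ?eqxx //;
 case: k => [|k] /=; rewrite ?eqxx.
Qed.

Lemma natr_cst m : (m%:R : P3) = cst3 (m%:R).
Proof. by rewrite /cst3 !rmorph_nat. Qed.

Lemma tdb_nat m : tdb (m%:R) 0.
Proof. by rewrite natr_cst; exact: tdb_cst. Qed.

Lemma coef3CC (r : {poly F}) k j i :
  coef3 (r%:P%:P : P3) k j i = if (i == 0%N) && (j == 0%N) then r`_k else 0.
Proof.
rewrite /coef3 coefC; case: i => [|i] /=; last by rewrite !coef0.
by rewrite coefC; case: j => [|j] /=; rewrite ?coef0.
Qed.

Lemma coef3C (s : {poly {poly F}}) k j i :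
  coef3 (s%:P : P3) k j i = if (i == 0%N) then (s`_j)`_k else 0.
Proof.
by rewrite /coef3 coefC; case: i => [|i] /=; rewrite ?coef0.
Qed.

Lemma tdb_Xv i : tdb (Xv i) 1.
Proof.
move=> a b c; rewrite /Xv.
case: ifP => _.
  rewrite coef3CC coefX; case: a => [|a] /=; rewrite ?eqxx //; case: b => [|b] /=; rewrite ?eqxx //.
  by case: c => [|[|c]] /=; rewrite ?eqxx.
case: ifP => _.
  rewrite coef3C coefX; case: a => [|a] /=; rewrite ?eqxx //; case: b => [|[|b]] /=; rewrite ?coef0 ?eqxx //.
  by rewrite coef1; case: c => [|c] /=; rewrite ?eqxx.
rewrite /coef3 coefX; case: a => [|[|a]] /=; rewrite ?coef0 ?eqxx //.
by rewrite coef1; case: b => [|b] /=; rewrite ?coef1 ?coef0 ?eqxx //; case: c => [|c] /=; rewrite ?eqxx.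
Qed.

Lemma tdeg_le p e : tdb p e -> (@tdeg F p <= e)%N.
Proof.
move=> H; rewrite /tdeg.
apply/bigmax_leqP => i _; apply/bigmax_leqP => j _; apply/bigmax_leqP => k _.
by case: ifP => // nz; exact: H.
Qed.

Lemma tdeg_ge p i j k : coef3 p k j i != 0 -> (i + j + k <= @tdeg F p)%N.
Proof.
move=> nz; rewrite /tdeg.
have hi : (i < size p)%N.
  rewrite ltnNge; apply/negP => H; move: nz; by rewrite /coef3 (nth_default 0 H) !coef0 eqxx.
have hj : (j < size (p`_i)%R)%N.
  rewrite ltnNge; apply/negP => H; move: nz; by rewrite /coef3 (nth_default 0 H) !coef0 eqxx.
have hk : (k < size ((p`_i)`_j)%R)%N.
  rewrite ltnNge; apply/negP => H; move: nz; by rewrite /coef3 (nth_default 0 H) eqxx.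
apply: leq_trans (leq_bigmax (Ordinal hi)); apply: leq_trans (leq_bigmax (Ordinal hj)).
by apply: leq_trans (leq_bigmax (Ordinal hk)); rewrite /= nz.
Qed.

End D.

Set Implicit Arguments. Unset Strict Implicit. Unset Printing Implicit Defensive.
Import Order.TTheory GRing.Theory Num.Theory.
Local Open Scope ring_scope.

Section E.
Variable F : fieldType.
Local Notation P3 := (P3 F).
Local Notation Xv := (Xv F).

Definition c00 : {rmorphism {poly {poly F}} -> F} := (coefp 0 \o coefp 0)%FUN.
Definition rho : {rmorphism P3 -> {poly F}} := map_poly c00.

Lemma rho_coef p c : (rho p)`_c = coef3 p 0 0 c.
Proof. rewrite /rho /= coef_map_id0. exact: erefl. by rewrite /= !coef0. Qed.

Lemma rho_X0 : rho (Xv i0) = 0.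
Proof. by apply/polyP => c; rewrite rho_coef /Xv /= coef3CC coefX coef0; case: (c == 0)%N. Qed.
Lemma rho_X1 : rho (Xv i1) = 0.
Proof. apply/polyP => c; rewrite rho_coef /Xv /= /coef3 coefC coef0; by case: (c == 0)%N; rewrite ?coefX ?coef0. Qed.
Lemma rho_X2 : rho (Xv i2) = 'X.
Proof. by apply/polyP => c; rewrite rho_coef /Xv /= /coef3 !coefX; case: (c == 1)%N; rewrite ?coef1 ?coef0. Qed.

Definition dle (p : {poly F}) e := (size p <= e.+1)%N.
Definition sz (p : {poly F}) e := size p = e.+1.

Lemma dle_le p e e' : dle p e -> (e <= e')%N -> dle p e'.
Proof. by rewrite /dle => h le; apply: leq_trans h _. Qed.
Lemma dle0 e : dle 0 e. Proof. by rewrite /dle size_poly0. Qed.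
Lemma dle_add p q e : dle p e -> dle q e -> dle (p + q) e.
Proof. by rewrite /dle => h1 h2; apply: leq_trans (size_add _ _) _; rewrite geq_max h1. Qed.
Lemma dle_opp p e : dle p e -> dle (- p) e.
Proof. by rewrite /dle size_opp. Qed.
Lemma dle_sub p q e : dle p e -> dle q e -> dle (p - q) e.
Proof. by move=> h1 h2; apply: dle_add => //; exact: dle_opp. Qed.
Lemma dle_mul p q a b : dle p a -> dle q b -> dle (p * q) (a + b).
Proof.
rewrite /dle => h1 h2; have h3 := size_mul_leq p q; move: h1 h2 h3.
set x := size p; set y := size q; set z := size (p * q); rewrite -subn1 => *; slia.
Qed.
Lemma dle1 : dle 1 0. Proof. by rewrite /dle size_poly1. Qed.
Lemma dle_exp p a m : dle p a -> dle (p ^+ m) (a * m).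
Proof.
move=> h; elim: m => [|m IH]; first by rewrite expr0 muln0; exact: dle1.
by rewrite exprS mulnS; exact: dle_mul.
Qed.
Lemma dle_X : dle 'X 1. Proof. by rewrite /dle size_polyX. Qed.
Lemma dle_nat m : dle m%:R 0.
Proof. by rewrite /dle -polyC_natr size_polyC; case: (_ != _). Qed.
Lemma sz_dle p e : sz p e -> dle p e. Proof. by rewrite /sz /dle => ->. Qed.

Lemma sz_ne0 p e : sz p e -> p != 0.
Proof. by rewrite /sz -size_poly_eq0 => ->. Qed.

Lemma sz_mul p q a b : sz p a -> sz q b -> sz (p * q) (a + b).
Proof.
move=> h1 h2; rewrite /sz size_mul ?(sz_ne0 h1) ?(sz_ne0 h2) //.
by rewrite h1 h2 addSn addnS.
Qed.
Lemma sz1 : sz 1 0. Proof. by rewrite /sz size_poly1. Qed.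
Lemma sz_exp p a m : sz p a -> sz (p ^+ m) (a * m).
Proof.
move=> h; elim: m => [|m IH]; first by rewrite expr0 muln0; exact: sz1.
by rewrite exprS mulnS; exact: sz_mul.
Qed.
Lemma sz_X : sz 'X 1. Proof. by rewrite /sz size_polyX. Qed.
Lemma sz_addl p q a b : sz p a -> dle q b -> (b < a)%N -> sz (p + q) a.
Proof.
rewrite /sz /dle => h1 h2 lt; rewrite size_addl // h1.
by apply: leq_ltn_trans h2 _.
Qed.
Lemma sz_addr p q a b : sz q a -> dle p b -> (b < a)%N -> sz (p + q) a.
Proof. by move=> h1 h2 lt; rewrite addrC; exact: sz_addl h1 h2 lt. Qed.
Lemma sz_opp p a : sz p a -> sz (- p) a. Proof. by rewrite /sz size_opp. Qed.
Lemma sz_natmul m p a : (m%:R : F) != 0 -> sz p a -> sz (m%:R * p) a.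
Proof. by move=> nz; rewrite /sz -polyC_natr size_Cmul. Qed.

Lemma tdeg_exact p c : tdb p c -> sz (rho p) c -> @tdeg F p = c.
Proof.
move=> hb hs; apply/eqP; rewrite eqn_leq tdeg_le //=.
have : coef3 p 0 0 c != 0.
  rewrite -rho_coef; have := sz_ne0 hs; rewrite -lead_coef_eq0 lead_coefE hs.
  by [].
by move/tdeg_ge; rewrite !addn0.
Qed.

End E.

Set Implicit Arguments. Unset Strict Implicit. Unset Printing Implicit Defensive.
Import GRing.Theory.
Local Open Scope ring_scope.

Section Abs.
Variables (A : Type) (z o : A) (ad mu : A -> A -> A) (sb : A -> A -> A) (op : A -> A)
  (nr : nat -> A) (pw : A -> nat -> A).
Hypothesis H : ring_theory z o ad mu sb op (@eq A).
Hypothesis nr0 : nr 0%N = z.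
Hypothesis nrS : forall n, nr (S n) = ad o (nr n).
Hypothesis pw0 : forall x, pw x 0%N = o.
Hypothesis pwS : forall x n, pw x (S n) = mu x (pw x n).
Add Ring AR : H.
Lemma absD3 (u v w : A) :
  sb (mu (nr 4) (pw (ad u (pw w 2)) 3))
     (pw (ad v (ad (mu (nr 2) (pw w 3)) (mu (mu (nr 3) u) w))) 2)
  = ad (op (mu (mu (nr 4) v) (pw w 3)))
       (sb (sb (ad (mu (nr 4) (pw u 3)) (mu (mu (nr 3) (pw u 2)) (pw w 2))) (pw v 2))
           (mu (mu (mu (nr 6) u) w) v)).
Proof. rewrite ?nrS ?nr0 ?pwS ?pw0. ring. Qed.
Lemma absD5 (u v w : A) :
  sb (mu (nr 64) (pw (ad u (pw w 2)) 5))
     (pw (ad v (ad (ad (mu (nr 8) (pw w 5)) (mu (mu (nr 20) u) (pw w 3))) (mu (mu (nr 15) (pw u 2)) w))) 2)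
  = ad (op (mu (mu (nr 16) v) (pw w 5)))
       (sb (sb (sb (ad (ad (mu (mu (nr 40) (pw u 3)) (pw w 4)) (mu (mu (nr 95) (pw u 4)) (pw w 2))) (mu (nr 64) (pw u 5)))
                   (mu (mu (mu (nr 40) u) v) (pw w 3)))
               (mu (mu (mu (nr 30) (pw u 2)) v) w))
           (pw v 2)).
Proof. rewrite ?nrS ?nr0 ?pwS ?pw0. ring. Qed.
End Abs.

Section Conc.
Variable R : comNzRingType.
Lemma RT : @ring_theory R 0 1 +%R *%R (fun x y => x - y) -%R (@eq R).
Proof. split=> //; [exact: add0r|exact: addrC|exact: addrA|exact: mul1r|exact: mulrC|exact: mulrA|exact: mulrDl|exact: subrr]. Qed.

Definition B3 (a w : R) := 2%:R * w ^+ 3 + 3%:R * a * w.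
Definition B5 (a w : R) := 8%:R * w ^+ 5 + 20%:R * a * w ^+ 3 + 15%:R * a ^+ 2 * w.
Definition D3 (a b : R) := 4%:R * a ^+ 3 - b ^+ 2.
Definition D5 (a b : R) := 64%:R * a ^+ 5 - b ^+ 2.

Lemma D3id (u v w : R) : D3 (u + w ^+ 2) (v + B3 u w) =
  - (4%:R * v * w ^+ 3) + (4%:R * u ^+ 3 + 3%:R * u ^+ 2 * w ^+ 2 - v ^+ 2 - 6%:R * u * w * v).
Proof.
exact: (@absD3 R 0 1 +%R *%R (fun x y => x - y) -%R (fun n => n%:R) (fun x n => x ^+ n) RT (mulr0n 1) (fun n => mulrS 1 n) (fun x => expr0 x) (fun x n => exprS x n)).
Qed.
Lemma D5id (u v w : R) : D5 (u + w ^+ 2) (v + B5 u w) =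
  - (16%:R * v * w ^+ 5) + (40%:R * u ^+ 3 * w ^+ 4 + 95%:R * u ^+ 4 * w ^+ 2 + 64%:R * u ^+ 5
     - 40%:R * u * v * w ^+ 3 - 30%:R * u ^+ 2 * v * w - v ^+ 2).
Proof.
exact: (@absD5 R 0 1 +%R *%R (fun x y => x - y) -%R (fun n => n%:R) (fun x n => x ^+ n) RT (mulr0n 1) (fun n => mulrS 1 n) (fun x => expr0 x) (fun x n => exprS x n)).
Qed.
End Conc.

Section Morph.
Variables (R S : comNzRingType) (f : {rmorphism R -> S}).
Lemma B3M a w : f (B3 a w) = B3 (f a) (f w).
Proof. by rewrite /B3 !(rmorphD, rmorphN, rmorphXn, rmorphM, rmorph_nat). Qed.
Lemma B5M a w : f (B5 a w) = B5 (f a) (f w).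
Proof. by rewrite /B5 !(rmorphD, rmorphN, rmorphXn, rmorphM, rmorph_nat). Qed.
Lemma D3M a w : f (D3 a w) = D3 (f a) (f w).
Proof. by rewrite /D3 !(rmorphD, rmorphN, rmorphXn, rmorphM, rmorph_nat). Qed.
Lemma D5M a w : f (D5 a w) = D5 (f a) (f w).
Proof. by rewrite /D5 !(rmorphD, rmorphN, rmorphXn, rmorphM, rmorph_nat). Qed.
End Morph.

Set Implicit Arguments. Unset Strict Implicit. Unset Printing Implicit Defensive.
Import Order.TTheory GRing.Theory Num.Theory.
Local Open Scope ring_scope.

Section G.
Variable F : fieldType.
Local Notation P3 := (P3 F).
Local Notation map3 := (map3 F).
Local Notation Xv := (Xv F).
Local Notation X1 := (Xv i0).
Local Notation X2 := (Xv i1).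
Local Notation X3 := (Xv i2).
Local Notation elem := (@elem F).
Local Notation sub := (@sub F).

Lemma ev_add p q (s : map3) : eval3 (p + q) s = eval3 p s + eval3 q s.
Proof. by rewrite !eval3E rmorphD. Qed.
Lemma ev_mul p q (s : map3) : eval3 (p * q) s = eval3 p s * eval3 q s.
Proof. by rewrite !eval3E rmorphM. Qed.
Lemma ev_exp p m (s : map3) : eval3 (p ^+ m) s = eval3 p s ^+ m.
Proof. by rewrite !eval3E rmorphXn. Qed.
Lemma ev_opp p (s : map3) : eval3 (- p) s = - eval3 p s.
Proof. by rewrite !eval3E rmorphN. Qed.
Lemma ev_nat m (s : map3) : eval3 (m%:R : P3) s = m%:R.
Proof. by rewrite !eval3E rmorph_nat. Qed.

Lemma elem_eq j h : elem j h j = Xv j + eval3 h (sub j).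
Proof. by rewrite /elem eqxx. Qed.
Lemma elem_ne j h i : i != j -> elem j h i = Xv i.
Proof. by move=> ne; rewrite /elem (negbTE ne). Qed.
Lemma sub_ne j i : i != j -> sub j i = Xv i.
Proof. by move=> ne; rewrite /sub (negbTE ne). Qed.
Lemma sub_eq j : sub j j = 0.
Proof. by rewrite /sub eqxx. Qed.

Ltac ev := rewrite ?(ev_add, ev_mul, ev_exp, ev_opp, ev_nat, eval3_Xv).
Ltac evs := ev; rewrite ?elem_eq ?sub_eq ?(@elem_ne _ _ i0) ?(@elem_ne _ _ i1) ?(@elem_ne _ _ i2) ?(@sub_ne _ i0) ?(@sub_ne _ i1) ?(@sub_ne _ i2) //.

Variables (Bf Qf : P3 -> P3 -> P3).
Hypothesis HB : forall s, eval3 (Bf X1 X3) s = Bf (s i0) (s i2).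
Hypothesis HQ : forall s, eval3 (Qf X1 X2) s = Qf (s i0) (s i1).

Definition Psi : map3 :=
  comp3 (elem i2 (Qf X1 X2)) (comp3 (elem i0 (X3 ^+ 2)) (elem i1 (Bf X1 X3))).

Ltac evq := rewrite ?HB ?HQ; evs; rewrite ?HB ?HQ; evs; rewrite ?HB ?HQ; evs.

Lemma Psi0 : Psi i0 = X1 + X3 ^+ 2.
Proof. by rewrite /Psi /comp3; evq. Qed.
Lemma Psi1 : Psi i1 = X2 + Bf X1 X3.
Proof. by rewrite /Psi /comp3; evq. Qed.
Lemma Psi2 : Psi i2 = X3 + Qf (X1 + X3 ^+ 2) (X2 + Bf X1 X3).
Proof. by rewrite /Psi /comp3; evq. Qed.

Lemma HQ' a b s : eval3 (Qf a b) s = Qf (eval3 a s) (eval3 b s).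
Proof.
pose t : map3 := fun i => if i == i0 then a else if i == i1 then b else 0.
have -> : Qf a b = eval3 (Qf X1 X2) t by rewrite HQ.
by rewrite eval3_assoc HQ /comp3.
Qed.

Lemma Psi_good : good Psi.
Proof. by apply: good_comp; [exact: good_elem| apply: good_comp; exact: good_elem]. Qed.

Variable Phi : map3.
Definition mk : map3 := comp3 Psi Phi.
Lemma mk_good : good Phi -> good mk.
Proof. by move=> h; apply: good_comp => //; exact: Psi_good. Qed.
Lemma mk0 : mk i0 = Phi i0 + Phi i2 ^+ 2.
Proof. by rewrite /mk /comp3 Psi0; ev. Qed.
Lemma mk1 : mk i1 = Phi i1 + Bf (Phi i0) (Phi i2).
Proof. by rewrite /mk /comp3 Psi1; ev; rewrite HB. Qed.
Lemma mk2 : mk i2 = Phi i2 + Qf (mk i0) (mk i1).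
Proof. by rewrite mk0 mk1 /mk /comp3 Psi2; ev; rewrite HQ'; ev; rewrite HB. Qed.


End G.

Section G2.
Variable F : fieldType.
Local Notation P3 := (P3 F).
Local Notation map3 := (map3 F).
Local Notation Xv := (Xv F).
Local Notation X1 := (Xv i0).
Local Notation X2 := (Xv i1).
Local Notation X3 := (Xv i2).
Local Notation elem := (@elem F).
Local Notation sub := (@sub F).
Ltac ev := rewrite ?(ev_add, ev_mul, ev_exp, ev_opp, ev_nat, eval3_Xv).
Ltac evs := ev; rewrite ?elem_eq ?sub_eq ?(@elem_ne _ _ _ i0) ?(@elem_ne _ _ _ i1) ?(@elem_ne _ _ _ i2) ?(@sub_ne _ _ i0) ?(@sub_ne _ _ i1) ?(@sub_ne _ _ i2) //.
Ltac evv := evs; evs; evs; evs.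

Definition Phi1 n : map3 := comp3 (elem i2 (X2 ^+ n)) (elem i1 X3).
Definition Phi2 n k : map3 := comp3 (comp3 (elem i1 (X1 ^+ k)) (elem i2 (X1 ^+ n))) (elem i0 X3).

Lemma Phi1_good n : good (Phi1 n).
Proof. by apply: good_comp; exact: good_elem. Qed.
Lemma Phi2_good n k : good (Phi2 n k).
Proof. by apply: good_comp; [apply: good_comp|]; exact: good_elem. Qed.

Lemma Phi1E n : [/\ Phi1 n i0 = X1, Phi1 n i1 = X2 + X3 & Phi1 n i2 = X3 + (X2 + X3) ^+ n].
Proof. by split; rewrite /Phi1 /comp3; evv. Qed.
Lemma Phi2E n k : [/\ Phi2 n k i0 = X1 + X3, Phi2 n k i1 = X2 + (X1 + X3) ^+ k
   & Phi2 n k i2 = X3 + (X1 + X3) ^+ n].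
Proof. by split; rewrite /Phi2 /comp3; evv. Qed.
End G2.

Set Implicit Arguments. Unset Strict Implicit. Unset Printing Implicit Defensive.
Import Order.TTheory GRing.Theory Num.Theory.
Local Open Scope ring_scope.

Ltac tbx := match goal with
 | |- tdb (_ * _) _ => apply: tdb_mul; tbx
 | |- tdb (_ ^+ _) _ => apply: tdb_exp; tbx
 | |- tdb (- _) _ => apply: tdb_opp; tbx
 | |- tdb (Xv _ _) _ => apply: tdb_Xv
 | |- tdb (_ %:R) _ => apply: tdb_nat
 | |- tdb 1 _ => apply: tdb1
 | |- _ => eassumption
 end.
Ltac tb := match goal with
 | |- tdb (_ + _) _ => apply: tdb_add; tb
 | |- tdb (_ - _) _ => apply: tdb_sub; tb
 | |- tdb (- _) _ => apply: tdb_opp; tb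
 | |- _ => apply: tdb_le; [tbx | slia]
 end.
Ltac dbx := match goal with
 | |- is_true (dle (_ * _) _) => apply: dle_mul; dbx
 | |- is_true (dle (_ ^+ _) _) => apply: dle_exp; dbx
 | |- is_true (dle (- _) _) => apply: dle_opp; dbx
 | |- is_true (dle 'X _) => apply: dle_X
 | |- is_true (dle (_ %:R) _) => apply: dle_nat
 | |- is_true (dle 1 _) => apply: dle1
 | |- _ => first [eassumption | apply: sz_dle; eassumption]
 end.
Ltac db := match goal with
 | |- is_true (dle (_ + _) _) => apply: dle_add; db
 | |- is_true (dle (_ - _) _) => apply: dle_sub; db
 | |- is_true (dle (- _) _) => apply: dle_opp; db
 | |- _ => apply: dle_le; [dbx | slia]
 end.

Section H.
Variable F : numClosedFieldType.
Local Notation P3 := (P3 F).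
Local Notation Xv := (Xv F).
Local Notation X1 := (Xv i0).
Local Notation X2 := (Xv i1).
Local Notation X3 := (Xv i2).
Local Notation rho := (@rho F).

Lemma natF m : (m.+1%:R : F) != 0.
Proof. by rewrite pnatr_eq0. Qed.

Lemma sz_Xn m : sz ('X ^+ m : {poly F}) m.
Proof. by have := sz_exp m (@sz_X F); rewrite mul1n. Qed.

Lemma sz_w n : (0 < n)%N -> sz ('X + 'X ^+ n : {poly F}) n.
Proof.
case: n => // -[|n] _.
  by rewrite expr1 -mulr2n -mulr_natl; apply: sz_natmul (natF 1) _; exact: sz_X.
by apply: sz_addr (sz_Xn _) (dle_X _) _.
Qed.

Section Deg.
Variables (u v w : P3) (du k n eu : nat).
Hypotheses (Hn : (0 < n)%N) (tu : tdb u du) (tv : tdb v k) (tw : tdb w n)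
  (ru : dle (rho u) eu) (rv : sz (rho v) k) (rw : sz (rho w) n).

Lemma rho_f1 : rho (u + w ^+ 2) = rho u + rho w ^+ 2.
Proof. by rewrite rmorphD rmorphXn. Qed.
Lemma rho_f2 : rho (v + B3 u w) = rho v + B3 (rho u) (rho w).
Proof. by rewrite rmorphD B3M. Qed.
Lemma rho_f2' : rho (v + B5 u w) = rho v + B5 (rho u) (rho w).
Proof. by rewrite rmorphD B5M. Qed.

Lemma f1_deg : (du <= 2 * n)%N -> (eu < 2 * n)%N ->
  tdb (u + w ^+ 2) (2 * n) /\ sz (rho (u + w ^+ 2)) (2 * n).
Proof.
move=> h1 h2; split; first by tb.
rewrite rho_f1; apply: sz_addr (_ : sz _ (2 * n)) ru h2.
by have := sz_exp 2 rw; rewrite mulnC.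
Qed.

Lemma sz_eqi (p : {poly F}) a b : sz p a -> a = b -> sz p b.
Proof. by move=> h <-. Qed.

Lemma f2_deg3 : (k < 3 * n)%N -> (du + n <= 3 * n)%N -> (eu + n < 3 * n)%N ->
  tdb (v + B3 u w) (3 * n) /\ sz (rho (v + B3 u w)) (3 * n).
Proof.
move=> h1 h2 h3; split; first by rewrite /B3; tb.
rewrite rho_f2 /B3; apply: sz_addr h1; last exact: sz_dle.
apply: sz_addl (_ : dle _ (eu + n)) h3; last by db.
apply: sz_natmul; first exact: (natF 1).
by apply: sz_eqi (sz_exp 3 rw) _; slia.
Qed.

Lemma f2_deg5 : (k < 5 * n)%N -> (2 * du + n <= 5 * n)%N -> (du + 3 * n <= 5 * n)%N ->
  (eu + 3 * n < 5 * n)%N -> (2 * eu + n < 5 * n)%N ->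
  tdb (v + B5 u w) (5 * n) /\ sz (rho (v + B5 u w)) (5 * n).
Proof.
move=> h1 h2 h3 h4 h5; split; first by rewrite /B5; tb.
rewrite rho_f2' /B5; apply: sz_addr h1; last exact: sz_dle.
rewrite -addrA; apply: sz_addl (_ : dle _ (5 * n - 1)) _; last 2 first.
- by db.
- by slia.
apply: sz_natmul; first exact: (natF 7).
by apply: sz_eqi (sz_exp 5 rw) _; slia.
Qed.

Lemma D3_deg : (3 * du <= 3 * n + k)%N -> (2 * du + 2 * n <= 3 * n + k)%N -> (2 * k <= 3 * n + k)%N ->
  (du + n + k <= 3 * n + k)%N ->
  (3 * eu < 3 * n + k)%N -> (2 * eu + 2 * n < 3 * n + k)%N -> (2 * k < 3 * n + k)%N ->
  (eu + n + k < 3 * n + k)%N ->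
  tdb (D3 (u + w ^+ 2) (v + B3 u w)) (3 * n + k) /\ sz (rho (D3 (u + w ^+ 2) (v + B3 u w))) (3 * n + k).
Proof.
move=> h1 h2 h3 h4 h5 h6 h7 h8; split; first by rewrite D3id; tb.
rewrite D3M rho_f1 rho_f2 D3id.
apply: sz_addl (_ : dle _ (3 * n + k - 1)) _; last 2 first.
- by db.
- by slia.
apply: sz_opp; rewrite -mulrA; apply: sz_natmul; first exact: (natF 3).
by apply: sz_eqi (sz_mul rv (sz_exp 3 rw)) _; slia.
Qed.

Lemma D5_deg : (3 * du + 4 * n <= 5 * n + k)%N -> (4 * du + 2 * n <= 5 * n + k)%N ->
  (5 * du <= 5 * n + k)%N -> (du + k + 3 * n <= 5 * n + k)%N -> (2 * du + k + n <= 5 * n + k)%N ->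
  (2 * k <= 5 * n + k)%N ->
  (3 * eu + 4 * n < 5 * n + k)%N -> (4 * eu + 2 * n < 5 * n + k)%N ->
  (5 * eu < 5 * n + k)%N -> (eu + k + 3 * n < 5 * n + k)%N -> (2 * eu + k + n < 5 * n + k)%N ->
  (2 * k < 5 * n + k)%N ->
  tdb (D5 (u + w ^+ 2) (v + B5 u w)) (5 * n + k) /\ sz (rho (D5 (u + w ^+ 2) (v + B5 u w))) (5 * n + k).
Proof.
move=> h1 h2 h3 h4 h5 h6 h7 h8 h9 h10 h11 h12; split; first by rewrite D5id; tb.
rewrite D5M rho_f1 rho_f2' D5id.
apply: sz_addl (_ : dle _ (5 * n + k - 1)) _; last 2 first.
- by db.
- by slia.
apply: sz_opp; rewrite -mulrA; apply: sz_natmul; first exact: (natF 15).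
by apply: sz_eqi (sz_mul rv (sz_exp 5 rw)) _; slia.
Qed.

End Deg.

Lemma f3_deg (w f1 r : P3) n m e : tdb w n -> sz (rho w) n -> tdb f1 (2 * n) -> sz (rho f1) (2 * n) ->
  tdb r e -> sz (rho r) e -> (n < 2 * n * m + e)%N ->
  @tdeg F (w + f1 ^+ m * r) = (2 * n * m + e)%N.
Proof.
move=> tw rw t1 r1 tr rr lt; apply: tdeg_exact; first by tb.
rewrite rmorphD rmorphM rmorphXn; apply: sz_addr (sz_dle rw) lt.
exact: sz_mul (sz_exp m r1) rr.
Qed.

End H.

Set Implicit Arguments. Unset Strict Implicit. Unset Printing Implicit Defensive.
Import Order.TTheory GRing.Theory Num.Theory.
Local Open Scope ring_scope.

Ltac tbx2 := match goal with
 | |- tdb (_ + _) _ => apply: tdb_add; tbx2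
 | |- tdb (_ * _) _ => apply: tdb_mul; tbx2
 | |- tdb (_ ^+ _) _ => apply: tdb_exp; tbx2
 | |- tdb (- _) _ => apply: tdb_opp; tbx2
 | |- tdb (Xv _ _) _ => apply: tdb_Xv
 | |- tdb (_ %:R) _ => apply: tdb_nat
 | |- tdb 1 _ => apply: tdb1
 | |- _ => eassumption
 end.
Ltac tb2 := match goal with
 | |- tdb (_ + _) _ => apply: tdb_add; tb2
 | |- _ => apply: tdb_le; [tbx2 | slia]
 end.

Section K.
Variable F : numClosedFieldType.
Local Notation P3 := (P3 F).
Local Notation map3 := (map3 F).
Local Notation Xv := (Xv F).
Local Notation X1 := (Xv i0).
Local Notation X2 := (Xv i1).
Local Notation X3 := (Xv i2).
Local Notation rho := (@rho F).

Lemma design1 n : (0 < n)%N ->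
  [/\ tdb (Phi1 F n i0) 1, tdb (Phi1 F n i1) 1 & tdb (Phi1 F n i2) n] /\
  [/\ dle (rho (Phi1 F n i0)) 0, sz (rho (Phi1 F n i1)) 1 & sz (rho (Phi1 F n i2)) n].
Proof.
move=> Hn; have [-> -> ->] := Phi1E F n.
split; split; [exact: tdb_Xv | by tb2 | by tb2 | | |].
- by rewrite rho_X0; exact: dle0.
- by rewrite rmorphD rho_X1 rho_X2 add0r; exact: sz_X.
- by rewrite rmorphD rmorphXn rmorphD rho_X1 rho_X2 add0r; exact: sz_w.
Qed.

Lemma design2 n k : (0 < n)%N -> (0 < k)%N ->
  [/\ tdb (Phi2 F n k i0) 1, tdb (Phi2 F n k i1) k & tdb (Phi2 F n k i2) n] /\
  [/\ dle (rho (Phi2 F n k i0)) 1, sz (rho (Phi2 F n k i1)) k & sz (rho (Phi2 F n k i2)) n].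
Proof.
move=> Hn Hk; have [-> -> ->] := Phi2E F n k.
split; split; [by tb2 | by tb2 | by tb2 | | |].
- by rewrite rmorphD rho_X0 rho_X2 add0r; exact: dle_X.
- by rewrite rmorphD rmorphXn rmorphD rho_X0 rho_X1 rho_X2 !add0r; exact: sz_Xn.
- by rewrite rmorphD rmorphXn rmorphD rho_X0 rho_X2 add0r; exact: sz_w.
Qed.

End K.

Set Implicit Arguments. Unset Strict Implicit. Unset Printing Implicit Defensive.
Import Order.TTheory GRing.Theory Num.Theory.
Local Open Scope ring_scope.

Section K2.
Variable F : numClosedFieldType.
Local Notation P3 := (P3 F).
Local Notation map3 := (map3 F).
Local Notation Xv := (Xv F).
Local Notation X1 := (Xv i0).
Local Notation X2 := (Xv i1).
Local Notation X3 := (Xv i2).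
Local Notation rho := (@rho F).

Lemma key3 (Phi : map3) n k du eu m :
  good Phi -> (0 < n)%N ->
  tdb (Phi i0) du -> tdb (Phi i1) k -> tdb (Phi i2) n ->
  dle (rho (Phi i0)) eu -> sz (rho (Phi i1)) k -> sz (rho (Phi i2)) n ->
  (du <= 2 * n)%N -> (eu < 2 * n)%N -> (k < 3 * n)%N -> (du + n <= 3 * n)%N -> (eu + n < 3 * n)%N ->
  (3 * du <= 3 * n + k)%N -> (2 * du + 2 * n <= 3 * n + k)%N -> (2 * k <= 3 * n + k)%N ->
  (du + n + k <= 3 * n + k)%N ->
  (3 * eu < 3 * n + k)%N -> (2 * eu + 2 * n < 3 * n + k)%N -> (2 * k < 3 * n + k)%N ->
  (eu + n + k < 3 * n + k)%N ->
  exists f : map3, tame f /\ poly_automorphism f /\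
    mdeg f = (2 * n, 3 * n, 2 * n * m + (3 * n + k))%N.
Proof.
move=> gP Hn tu tv tw ru rv rw c1 c2 c3 c4 c5 d1 d2 d3 d4 d5 d6 d7 d8.
pose Bf := fun a b : P3 => B3 a b. pose Qf := fun a b : P3 => a ^+ m * D3 a b.
have HB : forall s, eval3 (Bf X1 X3) s = Bf (s i0) (s i2).
  by move=> s; rewrite /Bf eval3E B3M -!eval3E !eval3_Xv.
have HQ : forall s, eval3 (Qf X1 X2) s = Qf (s i0) (s i1).
  by move=> s; rewrite /Qf eval3E rmorphM rmorphXn D3M -!eval3E !eval3_Xv.
have [tg ag] := mk_good Bf Qf gP.
exists (mk Bf Qf Phi); split; first exact: tg; split; first exact: ag.
rewrite /mdeg (mk2 HB HQ) (@mk1 _ Bf Qf HB) mk0 /Bf /Qf.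
have [t1 s1] := f1_deg tu tw ru rw c1 c2.
have [t2 s2] := f2_deg3 tu tv tw ru rv rw c3 c4 c5.
have [t3 s3] := D3_deg tu tv tw ru rv rw d1 d2 d3 d4 d5 d6 d7 d8.
congr (_, _, _).
- exact: tdeg_exact t1 s1.
- exact: tdeg_exact t2 s2.
- apply: f3_deg tw rw t1 s1 t3 s3 _; slia.
Qed.

Lemma key5 (Phi : map3) n k du eu m :
  good Phi -> (0 < n)%N ->
  tdb (Phi i0) du -> tdb (Phi i1) k -> tdb (Phi i2) n ->
  dle (rho (Phi i0)) eu -> sz (rho (Phi i1)) k -> sz (rho (Phi i2)) n ->
  (du <= 2 * n)%N -> (eu < 2 * n)%N -> (k < 5 * n)%N -> (2 * du + n <= 5 * n)%N -> (du + 3 * n <= 5 * n)%N ->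
  (eu + 3 * n < 5 * n)%N -> (2 * eu + n < 5 * n)%N ->
  (3 * du + 4 * n <= 5 * n + k)%N -> (4 * du + 2 * n <= 5 * n + k)%N ->
  (5 * du <= 5 * n + k)%N -> (du + k + 3 * n <= 5 * n + k)%N -> (2 * du + k + n <= 5 * n + k)%N ->
  (2 * k <= 5 * n + k)%N ->
  (3 * eu + 4 * n < 5 * n + k)%N -> (4 * eu + 2 * n < 5 * n + k)%N ->
  (5 * eu < 5 * n + k)%N -> (eu + k + 3 * n < 5 * n + k)%N -> (2 * eu + k + n < 5 * n + k)%N ->
  (2 * k < 5 * n + k)%N ->
  exists f : map3, tame f /\ poly_automorphism f /\
    mdeg f = (2 * n, 5 * n, 2 * n * m + (5 * n + k))%N.
Proof.
move=> gP Hn tu tv tw ru rv rw c1 c2 c3 c4 c5 c6 c7 d1 d2 d3 d4 d5 d6 d7 d8 d9 d10 d11 d12.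
pose Bf := fun a b : P3 => B5 a b. pose Qf := fun a b : P3 => a ^+ m * D5 a b.
have HB : forall s, eval3 (Bf X1 X3) s = Bf (s i0) (s i2).
  by move=> s; rewrite /Bf eval3E B5M -!eval3E !eval3_Xv.
have HQ : forall s, eval3 (Qf X1 X2) s = Qf (s i0) (s i1).
  by move=> s; rewrite /Qf eval3E rmorphM rmorphXn D5M -!eval3E !eval3_Xv.
have [tg ag] := mk_good Bf Qf gP.
exists (mk Bf Qf Phi); split; first exact: tg; split; first exact: ag.
rewrite /mdeg (mk2 HB HQ) (@mk1 _ Bf Qf HB) mk0 /Bf /Qf.
have [t1 s1] := f1_deg tu tw ru rw c1 c2.
have [t2 s2] := f2_deg5 tu tv tw ru rv rw c3 c4 c5 c6 c7.
have [t3 s3] := D5_deg tu tv tw ru rv rw d1 d2 d3 d4 d5 d6 d7 d8 d9 d10 d11 d12.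
congr (_, _, _).
- exact: tdeg_exact t1 s1.
- exact: tdeg_exact t2 s2.
- apply: f3_deg tw rw t1 s1 t3 s3 _; slia.
Qed.

Lemma key5j (Phi : map3) n k du eu m j :
  good Phi -> (0 < n)%N ->
  tdb (Phi i0) du -> tdb (Phi i1) k -> tdb (Phi i2) n ->
  dle (rho (Phi i0)) eu -> sz (rho (Phi i1)) k -> sz (rho (Phi i2)) n ->
  (du <= 2 * n)%N -> (eu < 2 * n)%N -> (k < 5 * n)%N -> (2 * du + n <= 5 * n)%N -> (du + 3 * n <= 5 * n)%N ->
  (eu + 3 * n < 5 * n)%N -> (2 * eu + n < 5 * n)%N -> (n < 2 * n * m + 5 * n * j)%N ->
  exists f : map3, tame f /\ poly_automorphism f /\
    mdeg f = (2 * n, 5 * n, 2 * n * m + 5 * n * j)%N.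
Proof.
move=> gP Hn tu tv tw ru rv rw c1 c2 c3 c4 c5 c6 c7 c8.
pose Bf := fun a b : P3 => B5 a b. pose Qf := fun a b : P3 => a ^+ m * b ^+ j.
have HB : forall s, eval3 (Bf X1 X3) s = Bf (s i0) (s i2).
  by move=> s; rewrite /Bf eval3E B5M -!eval3E !eval3_Xv.
have HQ : forall s, eval3 (Qf X1 X2) s = Qf (s i0) (s i1).
  by move=> s; rewrite /Qf eval3E rmorphM !rmorphXn -!eval3E !eval3_Xv.
have [tg ag] := mk_good Bf Qf gP.
exists (mk Bf Qf Phi); split; first exact: tg; split; first exact: ag.
rewrite /mdeg (mk2 HB HQ) (@mk1 _ Bf Qf HB) mk0 /Bf /Qf.
have [t1 s1] := f1_deg tu tw ru rw c1 c2.
have [t2 s2] := f2_deg5 tu tv tw ru rv rw c3 c4 c5 c6 c7.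
have t3 := @tdb_exp _ _ _ j t2.
have s3 : sz (rho ((Phi i1 + B5 (Phi i0) (Phi i2)) ^+ j)) (5 * n * j) by rewrite rmorphXn; exact: sz_exp.
congr (_, _, _).
- exact: tdeg_exact t1 s1.
- exact: tdeg_exact t2 s2.
- apply: f3_deg tw rw t1 s1 t3 s3 _; slia.
Qed.

End K2.

Unset Implicit Arguments.
Local Close Scope ring_scope.

Lemma divfacts q d : (0 < d)%N -> exists m r, q = (m * d + r)%N /\ (r < d)%N.
Proof. move=> hd; exists (q %/ d), (q %% d); split; [exact: divn_eq | exact: ltn_pmod]. Qed.

Lemma part3 (F : numClosedFieldType) (n : nat) : (0 < n)%N -> forall c : nat, (3 * n < c)%N ->
     exists f : map3 F, tame f /\ poly_automorphism f /\ mdeg f = (2 * n, 3 * n, c)%N.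
Proof.
move=> Hn c Hc.
have hd : (0 < 2 * n)%N by slia.
have [m [r [Eq Hr]]] := @divfacts (c - 3 * n - 1) (2 * n) hd.
have Ec : c = (2 * n * m + (3 * n + (r + 1)))%N by tolia; nia.
case: (eqVneq r 0) => [r0|rn0].
- have [[t0 t1 t2] [r0' r1 r2]] := design1 F Hn.
  rewrite r0 /= in Ec.
  have [f [tf [af df]]] := key3 m (Phi1_good F n) Hn t0 t1 t2 r0' r1 r2
    ltac:(slia) ltac:(slia) ltac:(slia) ltac:(slia) ltac:(slia) ltac:(slia) ltac:(slia) ltac:(slia)
    ltac:(slia) ltac:(slia) ltac:(slia) ltac:(slia) ltac:(slia).
  by exists f; rewrite Ec.
- have hk : (0 < r + 1)%N by slia.
  have [[t0 t1 t2] [r0' r1 r2]] := design2 F Hn hk.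
  have r1' : (1 <= r)%N by rewrite lt0n.
  have [f [tf [af df]]] := key3 m (Phi2_good F n (r + 1)) Hn t0 t1 t2 r0' r1 r2
    ltac:(slia) ltac:(slia) ltac:(slia) ltac:(slia) ltac:(slia) ltac:(slia) ltac:(slia) ltac:(slia)
    ltac:(slia) ltac:(slia) ltac:(slia) ltac:(slia) ltac:(slia).
  by exists f; rewrite Ec.
Qed.

Lemma part5 (F : numClosedFieldType) (n : nat) : (0 < n)%N -> forall c : nat, (5 * n < c)%N ->
     exists f : map3 F, tame f /\ poly_automorphism f /\ mdeg f = (2 * n, 5 * n, c)%N.
Proof.
move=> Hn c Hc.
case: (ltnP 1 n) => [n2|n1].
  have hd : (0 < 2 * n)%N by slia.
  have [m [r [Eq Hr]]] := @divfacts (c - 5 * n - 1) (2 * n) hd.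
  have Ec : c = (2 * n * m + (5 * n + (r + 1)))%N by tolia; nia.
  case: (eqVneq r 0) => [r0|rn0].
  - have [[t0 t1 t2] [r0' r1 r2]] := design1 F Hn.
    rewrite r0 /= in Ec.
    have [f [tf [af df]]] := key5 m (Phi1_good F n) Hn t0 t1 t2 r0' r1 r2
      ltac:(slia) ltac:(slia) ltac:(slia) ltac:(slia) ltac:(slia) ltac:(slia) ltac:(slia) ltac:(slia)
      ltac:(slia) ltac:(slia) ltac:(slia) ltac:(slia) ltac:(slia) ltac:(slia) ltac:(slia) ltac:(slia)
      ltac:(slia) ltac:(slia) ltac:(slia).
    by exists f; rewrite Ec.
  - have hk : (0 < r + 1)%N by slia.
    have [[t0 t1 t2] [r0' r1 r2]] := design2 F Hn hk.
    have r1' : (1 <= r)%N by rewrite lt0n.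
    have [f [tf [af df]]] := key5 m (Phi2_good F n (r + 1)) Hn t0 t1 t2 r0' r1 r2
      ltac:(slia) ltac:(slia) ltac:(slia) ltac:(slia) ltac:(slia) ltac:(slia) ltac:(slia) ltac:(slia)
      ltac:(slia) ltac:(slia) ltac:(slia) ltac:(slia) ltac:(slia) ltac:(slia) ltac:(slia) ltac:(slia)
      ltac:(slia) ltac:(slia) ltac:(slia).
    by exists f; rewrite Ec.
have n1' : n = 1%N by slia.
subst n.
have hk : (0 < 1)%N by [].
have [[t0 t1 t2] [r0' r1 r2]] := design2 F Hn hk.
case: (ltnP c 8) => [c8|c8].
  case: (eqVneq c 6) => [->|c6].
    have [f [tf [af df]]] := @key5j _ _ 1 1 1 1 3 0 (Phi2_good F 1 1) Hn t0 t1 t2 r0' r1 r2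
      isT isT isT isT isT isT isT isT.
    by exists f.
  have -> : c = 7%N by move/eqP: c6 => c6; slia.
  have [f [tf [af df]]] := @key5j _ _ 1 1 1 1 1 1 (Phi2_good F 1 1) Hn t0 t1 t2 r0' r1 r2
    isT isT isT isT isT isT isT isT.
  by exists f.
have hd : (0 < 2)%N by [].
have [m [r [Eq Hr]]] := @divfacts (c - 8) 2 hd.
have hk3 : (0 < r + 3)%N by slia.
have [[s0 s1 s2] [q0 q1 q2]] := design2 F Hn hk3.
have Ec : c = (2 * 1 * m + (5 * 1 + (r + 3)))%N by slia.
have [f [tf [af df]]] := key5 m (Phi2_good F 1 (r + 3)) Hn s0 s1 s2 q0 q1 q2
  ltac:(slia) ltac:(slia) ltac:(slia) ltac:(slia) ltac:(slia) ltac:(slia) ltac:(slia) ltac:(slia)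
  ltac:(slia) ltac:(slia) ltac:(slia) ltac:(slia) ltac:(slia) ltac:(slia) ltac:(slia) ltac:(slia)
  ltac:(slia) ltac:(slia) ltac:(slia).
by exists f; rewrite Ec.
Qed.

Theorem corollary2 (F : numClosedFieldType) (n : nat) :
  (0 < n)%N ->
  (forall c : nat, (3 * n < c)%N ->
     exists f : map3 F, tame f /\ poly_automorphism f /\ mdeg f = (2 * n, 3 * n, c)%N) /\
  (forall c : nat, (5 * n < c)%N ->
     exists f : map3 F, tame f /\ poly_automorphism f /\ mdeg f = (2 * n, 5 * n, c)%N).
Proof. by move=> Hn; split; [exact: part3 | exact: part5]. Qed.
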